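(* Let $\boldsymbol{Q}$ be a real $(d\times d)$ orthogonal matrix. Then $\boldsymbol{Q}$ can be factorized as $\boldsymbol{Q}=\boldsymbol{P}\boldsymbol{L}\boldsymbol{R}^{-1}$, where $\boldsymbol{P}$ is a $(d\times d)$ permutation matrix and $\boldsymbol{L}$ is a $(d\times d)$ unit lower triangular matrix such that $\boldsymbol{Q}=\boldsymbol{P}\boldsymbol{L}\boldsymbol{U}$ for some $(d\times d)$ upper triangular matrix $\boldsymbol{U}$ (a PLU decomposition of $\boldsymbol{Q}$), and $\boldsymbol{R}$ is the upper triangular matrix in the QR decomposition $\boldsymbol{P}\boldsymbol{L}=\widetilde{\boldsymbol{Q}}\boldsymbol{R}$ of the invertible matrix $\boldsymbol{P}\boldsymbol{L}$ (with $\widetilde{\boldsymbol{Q}}$ orthogonal).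
   Context: A unit lower triangular matrix is a lower triangular matrix with all diagonal entries equal to $1$. The paper uses, as given facts, that every invertible $(d\times d)$ real matrix $\boldsymbol{A}$ admits a PLU decomposition $\boldsymbol{A}=\boldsymbol{P}\boldsymbol{L}\boldsymbol{U}$ ($\boldsymbol{P}$ a permutation matrix, $\boldsymbol{L}$ unit lower triangular, $\boldsymbol{U}$ upper triangular), and a QR decomposition $\boldsymbol{A}=\boldsymbol{Q}\boldsymbol{R}$ with $\boldsymbol{Q}$ orthogonal and $\boldsymbol{R}$ upper triangular, which the paper takes to be unique. *)

(* Defs.v *)
From HB Require Import structures.
From mathcomp Require Import all_boot all_order all_algebra all_fingroup.
From mathcomp Require Import reals.
Set Implicit Arguments. Unset Strict Implicit. Unset Printing Implicit Defensive.
Import Order.TTheory GRing.Theory Num.Theory.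
Local Open Scope ring_scope.

Definition orthogonal_mx (R : realType) (d : nat) (Q : 'M[R]_d) : Prop :=
  Q^T *m Q = 1%:M /\ Q *m Q^T = 1%:M.

Definition perm_matrix (R : realType) (d : nat) (P : 'M[R]_d) : Prop :=
  exists s : 'S_d, P = perm_mx s.

Definition unit_lower_tri (R : realType) (d : nat) (L : 'M[R]_d) : Prop :=
  (forall i j : 'I_d, (i < j)%N -> L i j = 0) /\ (forall i : 'I_d, L i i = 1).

Definition upper_tri (R : realType) (d : nat) (U : 'M[R]_d) : Prop :=
  forall i j : 'I_d, (j < i)%N -> U i j = 0.

(* Main.v *)
Require Import Defs.
From HB Require Import structures.
From mathcomp Require Import all_boot all_order all_algebra all_fingroup.
From mathcomp Require Import reals.
Import Order.TTheory GRing.Theory Num.Theory.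
Local Open Scope ring_scope.

Lemma upper_inv_aux (F : fieldType) n (U V : 'M[F]_n) :
  (forall i j : 'I_n, (j < i)%N -> U i j = 0) ->
  V *m U = 1%:M -> (forall i, U i i != 0) ->
  forall i j : 'I_n, (j < i)%N -> V i j = 0.
Proof.
move=> Uu VU Ud.
suff H : forall m (j : 'I_n), (j < m)%N -> forall i : 'I_n, (j < i)%N -> V i j = 0.
  by move=> i j; apply: (H j.+1).
elim=> [|m IH] j // ltjm i ltji.
case: (ltnP j m) => [/IH|lemj]; first by apply.
have ejm : nat_of_ord j = m by apply/eqP; rewrite eqn_leq lemj -ltnS ltjm.
have := congr1 (fun M : 'M[F]_n => M i j) VU.
rewrite !mxE (bigD1 j) //= big1; last first.
  move=> k /negbTE kj.
  case: (ltngtP k j) => [ltkj|ltjk|/val_inj ekj]; last by rewrite ekj eqxx in kj.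
  - by rewrite (IH k) ?mul0r // -?ejm // (ltn_trans ltkj ltji).
  - by rewrite Uu ?mulr0.
rewrite addr0 (_ : (i == j) = false); last by apply/negbTE; rewrite neq_ltn ltji orbT.
by move/eqP; rewrite mulf_eq0 (negbTE (Ud j)) orbF => /eqP.
Qed.

Theorem theorem1 (R : realType) (d : nat) (Q : 'M[R]_d) :
  orthogonal_mx Q ->
  exists (P L U : 'M[R]_d),
    [/\ perm_matrix P, unit_lower_tri L, upper_tri U & Q = P *m L *m U] /\
    exists (Qt Rr : 'M[R]_d),
      [/\ orthogonal_mx Qt, upper_tri Rr, Rr \in unitmx, P *m L = Qt *m Rr
        & Q = P *m L *m invmx Rr].
Proof.
case: d Q => [|n] Q HQ.
  exists 1%:M, 1%:M, Q; split.
    split; last by rewrite !flatmx0.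
    - by exists 1%g; rewrite perm_mx1.
    - by split=> [[]|[]].
    - by move=> [].
  exists Q, 1%:M; split=> //; first by move=> [].
  - exact: unitmx1.
  - by rewrite !flatmx0.
  - by rewrite !flatmx0.
have Qu : Q \in unitmx by case: (mulmx1_unit HQ.1).
have Hc := cormen_lup_correct Q.
have Hp := cormen_lup_perm Q.
have Hl := @cormen_lup_lower _ _ Q.
have Hu := @cormen_lup_upper _ _ Q.
move: Hc Hp Hl Hu; case: cormen_lup => [[P0 L] U] /= Hc /is_perm_mxP [s Ps] Hl Hu.
have EQ : Q = perm_mx s^-1 *m L *m U.
  have Hc' : P0 *m Q = L *m U := Hc.
  by rewrite -mulmxA -Hc' Ps mulmxA -perm_mxM (mulVg s) perm_mx1 mul1mx.
have Uu : U \in unitmx.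
  by move: Qu; rewrite EQ unitmx_mul => /andP[].
exists (perm_mx s^-1), L, U; split.
  split.
  - by exists s^-1%g.
  - split=> [i j ltij|i].
      rewrite (Hl i j (ltnW ltij)).
      have -> : (i == j) = false by apply/negbTE; rewrite neq_ltn ltij.
      by [].
    by rewrite (Hl i i (leqnn _)) eqxx.
  - move=> i j; exact: Hu.
  - exact: EQ.
exists Q, (invmx U); split.
- exact: HQ.
- apply: (@upper_inv_aux _ _ U) => //; first exact: mulVmx.
  move=> i; move: Uu; rewrite unitmxE -det_tr det_trig; last first.
    by apply/is_trig_mxP => a b ltab; rewrite mxE Hu.
  rewrite unitfE prodf_seq_neq0 => /allP /(_ i (mem_index_enum _)) /=.
  by rewrite mxE.
- by rewrite unitmx_inv.
- by rewrite EQ mulmxK.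
- by rewrite invmxK.
Qed.
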